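(* If $H=(S_0,e_0,S_1,e_1,\dots)$ is a history sequence of the Simpler Lazy Set algorithm, then the structure $M_H$ (with $\gamma$ as defined in the context) satisfies the Lazy Set axioms A0, A1, A2.
   Context: Simpler Lazy Set algorithm. Fix a countably infinite set $A$ of addresses with distinguished $\mathsf H,\mathsf T$; $\mathrm{Number}=\mathbb N\cup\{-1,\infty\}$. A state $S$: set $\mathrm{Active}^S\subseteq A$, $\mathrm{Next}^S:\mathrm{Active}^S\setminus\{\mathsf T\}\to A$, $\mathrm{Val}^S:\mathrm{Active}^S\to\mathrm{Number}$, and for each process $p$: $PC_p\in\{0,1,2,3.1,\dots,3.5\}$, $x_p\in\mathbb N$, $\mathrm{curr}_p\in A$, $\mathrm{status}_p$. $S$ is normal if $\mathrm{Active}^S$ is finite, $\mathsf H,\mathsf T$ are active with values $-1,\infty$, other active addresses have values in $\mathbb N$, and for active $a\neq\mathsf T$, $\mathrm{Next}(a)$ is active with $\mathrm{Val}(a)<\mathrm{Val}(\mathrm{Next}(a))$. The main branch is the path of $\mathrm{Next}$-links from $\mathsf H$ to $\mathsf T$. Initial state: $\mathrm{Active}=\{\mathsf H,\mathsf T\}$, $\mathrm{Next}(\mathsf H)=\mathsf T$, all $PC_p=0$. Steps $(S,e,T)$ of a process $p$ on a normal $S$: (i) invocation: $PC_p$ from $0$ to $1$, $2$ or $3.1$, with $x_p\in\mathbb N$ arbitrary; (ii) failure: $PC_p$ from $1$ or $2$ to $0$ with $\chi(e)=f$, nothing else changes; (iii) $\mathrm{AD}(x)$ ($x=x_p$, $PC_p$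 from $1$ to $0$): with $\mathfrak p$ the main-branch address having $\mathrm{Val}(\mathfrak p)<x\le\mathrm{Val}(\mathrm{Next}(\mathfrak p))$: if $\mathrm{Val}(\mathrm{Next}(\mathfrak p))=x$, no other change, $\chi(e)=1$, $\mathrm{adr}(e)=\mathrm{Next}^S(\mathfrak p)$; else a new address $a\notin\mathrm{Active}^S$ is made active with $\mathrm{Val}(a)=x$, $\mathrm{Next}^T(\mathfrak p)=a$, $\mathrm{Next}^T(a)=\mathrm{Next}^S(\mathfrak p)$, $\chi(e)=0$, $\mathrm{adr}(e)=a$; (iv) $\mathrm{RM}(x)$ ($PC_p$ from $2$ to $0$): if the main branch has an address $cu$ of value $x$, with $pred$ its main-branch predecessor, set $\mathrm{Next}^T(pred)=\mathrm{Next}^S(cu)$, $\chi(e)=1$, $\mathrm{adr}(e)=cu$; else no change, $\chi(e)=0$; (v) CONTAINS$(x)$ lines, each an atomic step: 3.1 $\mathrm{curr}_p:=\mathsf H$; 3.2/3.3 $\mathrm{curr}_p:=\mathrm{Next}(\mathrm{curr}_p)$; 3.4 if $\mathrm{Val}(\mathrm{curr}_p)\ge x$ go to 3.5 else to 3.3; 3.5 return $1$ if $\mathrm{Val}(\mathrm{curr}_p)=x$ else $0$, $PC_p:=0$. A history sequence is $(S_0,e_0,S_1,\dots)$ with $S_0$ initial and each $(S_i,e_i,S_{i+1})$ a step of some process. Every active address $a\notin\{\mathsf H,\mathsf T\}$ has a unique activating step $\mathrm{activation}(a)$: the $\mathrm{AD}$ action $e_i$ with $\chi(e_i)=0$ and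 $\mathrm{adr}(e_i)=a$. Structure $M_H$: its actions are the $e_i$, ordered by $e_i<e_j$ iff $i<j$; its high-level events are the CONTAINS$(x)$ operation executions $E$ (the set of actions of one process executing one CONTAINS protocol), with $\mathrm{Begin}(E)$ its first action (line 3.1) and $\mathrm{End}(E)$ its last (return) action; $\mathrm{Begin}(e)=\mathrm{End}(e)=e$ for actions; for events $X<Y$ iff $\mathrm{End}(X)<\mathrm{Begin}(Y)$. $\mathrm{Add}(e)$ iff $e$ is an $\mathrm{AD}$ action (including failures at line 1), $\mathrm{Rem}(e)$ iff $e$ is an $\mathrm{RM}$ action (including failures at line 2), $\mathrm{Cnt}(E)$ iff $E$ is a CONTAINS execution; $\mathrm{val}$ is the parameter $x$ and $\chi$ the returned status. $\gamma$: for an $\mathrm{AD}$ or $\mathrm{RM}$ action $e$ with $\chi(e)=1$, $\gamma(e)=\mathrm{activation}(\mathrm{adr}(e))$; for a CONTAINS execution $E$ with $\chi(E)=1$, whose variable $\mathrm{curr}$ takes final value $a_m$ (an active address of value $x$), $\gamma(E)=\mathrm{activation}(a_m)$. Notation: $\mathrm{Add}^p(a)$ abbreviates $\mathrm{Add}(a)\wedge\chi(a)=p$, similarly $\mathrm{Rem}^p,\mathrm{Cnt}^p$; $\mathrm{Op}^p(a)$ abbreviates $(\mathrm{Add}(a)\vee\mathrm{Rem}(a)\vee\mathrm{Cnt}(a))\wedge\chi(a)=p$, $p\in\{0,1\}$. A0: $\mathrm{Add},\mathrm{Rem},\mathrm{Cnt}$ pairwise disjoint; $\mathrm{Add},\mathrm{Rem}$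 events are actions, $\mathrm{Cnt}$ events high-level; $\mathrm{Begin}(X),\mathrm{End}(X)$ are actions; $\mathrm{Begin}(E)<\mathrm{End}(E)$ for $\mathrm{Cnt}$ events; $<$ is linear on actions. A1: for every $A$ with $\mathrm{Op}^1(A)$: $\mathrm{Add}^0(\gamma(A))$, $\mathrm{val}(\gamma(A))=\mathrm{val}(A)$, $\gamma(A)<\mathrm{End}(A)$, and no $R$ has $\mathrm{Rem}^1(R)$, $\gamma(R)=\gamma(A)$, $\gamma(A)<R<A$. A2: if $\mathrm{Op}^0(B)$, $\mathrm{Add}^0(A)$, $A<B$, $\mathrm{val}(A)=\mathrm{val}(B)$, then some $R$ has $\mathrm{Rem}^1(R)$, $A=\gamma(R)$, $R<\mathrm{End}(B)$. *)

(* Defs.v *)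
From Stdlib Require Import Arith List ClassicalEpsilon.

Inductive Num := NegOne | Fin (n : nat) | Inf.

Definition num_lt (a b : Num) : Prop :=
  match a, b with
  | NegOne, NegOne => False
  | NegOne, _ => True
  | Fin m, Fin n => m < n
  | Fin _, Inf => True
  | _, _ => False
  end.

Definition num_le (a b : Num) : Prop := num_lt a b \/ a = b.

Inductive PCv := PC0 | PC1 | PC2 | PC31 | PC32 | PC33 | PC34 | PC35.

(* returned status values: f (failure), 0, 1, or none (non-returning action) *)
Inductive Chi := ChiF | Chi0 | Chi1 | ChiNone.

(* kind of an action: invocation, AD (incl. failure at line 1),
   RM (incl. failure at line 2), CONTAINS lines 3.1 .. 3.5 *)
Inductive Kind := KInv | KAdd | KRem | K31 | K32 | K33 | K34 | K35.

Record State (A P : Type) := mkState {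
  Active : A -> Prop;
  Next : A -> A;          (* meaningful on Active \ {T} *)
  Val : A -> Num;         (* meaningful on Active *)
  PC : P -> PCv;
  xv : P -> nat;
  curr : P -> A;
  status : P -> Chi
}.
Arguments Active {A P}. Arguments Next {A P}. Arguments Val {A P}.
Arguments PC {A P}. Arguments xv {A P}. Arguments curr {A P}.
Arguments status {A P}.

Record Event (A P : Type) := mkEvent {
  ev_proc : P;
  ev_kind : Kind;
  ev_val : nat;
  ev_chi : Chi;
  ev_adr : A
}.
Arguments ev_proc {A P}. Arguments ev_kind {A P}. Arguments ev_val {A P}.
Arguments ev_chi {A P}. Arguments ev_adr {A P}.

Section Model.
Context {A P : Type} (H T : A).

Definition normal (S : State A P) : Prop :=
  (exists l : list A, forall a, Active S a <-> In a l) /\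
  Active S H /\ Active S T /\ Val S H = NegOne /\ Val S T = Inf /\
  (forall a, Active S a -> a <> H -> a <> T -> exists n, Val S a = Fin n) /\
  (forall a, Active S a -> a <> T ->
     Active S (Next S a) /\ num_lt (Val S a) (Val S (Next S a))).

Inductive main (S : State A P) : A -> Prop :=
  | main_H : main S H
  | main_next : forall a, main S a -> a <> T -> main S (Next S a).

Definition initial (S : State A P) : Prop :=
  (forall a, Active S a <-> a = H \/ a = T) /\
  Next S H = T /\ Val S H = NegOne /\ Val S T = Inf /\
  (forall p, PC S p = PC0).

Definition heap_same (S S' : State A P) : Prop :=
  (forall a, Active S' a <-> Active S a) /\
  (forall a, Active S a -> Val S' a = Val S a) /\
  (forall a, Active S a -> a <> T -> Next S' a = Next S a).

Definition others_same (p : P) (S S' : State A P) : Prop :=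
  forall q, q <> p ->
    PC S' q = PC S q /\ xv S' q = xv S q /\ curr S' q = curr S q /\
    status S' q = status S q.

Definition locals_same (p : P) (S S' : State A P) : Prop :=
  xv S' p = xv S p /\ curr S' p = curr S p.

Definition step_inv p S (e : Event A P) S' : Prop :=
  PC S p = PC0 /\ (PC S' p = PC1 \/ PC S' p = PC2 \/ PC S' p = PC31) /\
  heap_same S S' /\ curr S' p = curr S p /\
  ev_kind e = KInv /\ ev_val e = xv S' p /\ ev_chi e = ChiNone.

Definition step_fail p S (e : Event A P) S' : Prop :=
  ((PC S p = PC1 /\ ev_kind e = KAdd) \/ (PC S p = PC2 /\ ev_kind e = KRem)) /\
  PC S' p = PC0 /\ ev_chi e = ChiF /\ ev_val e = xv S p /\
  heap_same S S' /\ locals_same p S S'.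

Definition step_AD p S (e : Event A P) S' : Prop :=
  let x := xv S p in
  PC S p = PC1 /\ PC S' p = PC0 /\ ev_kind e = KAdd /\ ev_val e = x /\
  locals_same p S S' /\
  exists pp, main S pp /\ pp <> T /\
    num_lt (Val S pp) (Fin x) /\ num_le (Fin x) (Val S (Next S pp)) /\
    ( (Val S (Next S pp) = Fin x /\ heap_same S S' /\
       ev_chi e = Chi1 /\ ev_adr e = Next S pp)
    \/
      (Val S (Next S pp) <> Fin x /\
       exists a, ~ Active S a /\
         (forall b, Active S' b <-> Active S b \/ b = a) /\
         Val S' a = Fin x /\
         (forall b, Active S b -> Val S' b = Val S b) /\
         Next S' pp = a /\ Next S' a = Next S pp /\
         (forall b, Active S b -> b <> T -> b <> pp -> Next S' b = Next S b) /\
         ev_chi e = Chi0 /\ ev_adr e = a) ).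

Definition step_RM p S (e : Event A P) S' : Prop :=
  let x := xv S p in
  PC S p = PC2 /\ PC S' p = PC0 /\ ev_kind e = KRem /\ ev_val e = x /\
  locals_same p S S' /\
  ( (exists cu pred, main S cu /\ Val S cu = Fin x /\
       main S pred /\ pred <> T /\ Next S pred = cu /\
       (forall b, Active S' b <-> Active S b) /\
       (forall b, Active S b -> Val S' b = Val S b) /\
       Next S' pred = Next S cu /\
       (forall b, Active S b -> b <> T -> b <> pred -> Next S' b = Next S b) /\
       ev_chi e = Chi1 /\ ev_adr e = cu)
  \/
    ((~ exists cu, main S cu /\ Val S cu = Fin x) /\
     heap_same S S' /\ ev_chi e = Chi0) ).

(* CONTAINS(x): 3.1 curr:=H (goto 3.2); 3.2 curr:=Next(curr) (goto 3.4);
   3.3 curr:=Next(curr) (goto 3.4); 3.4 test; 3.5 return *)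
Definition step_contains p S (e : Event A P) S' : Prop :=
  heap_same S S' /\ xv S' p = xv S p /\ ev_val e = xv S p /\
  ( (PC S p = PC31 /\ PC S' p = PC32 /\ curr S' p = H /\
     ev_kind e = K31 /\ ev_chi e = ChiNone)
  \/ (PC S p = PC32 /\ PC S' p = PC34 /\ curr S' p = Next S (curr S p) /\
     ev_kind e = K32 /\ ev_chi e = ChiNone)
  \/ (PC S p = PC33 /\ PC S' p = PC34 /\ curr S' p = Next S (curr S p) /\
     ev_kind e = K33 /\ ev_chi e = ChiNone)
  \/ (PC S p = PC34 /\ curr S' p = curr S p /\
     ((num_le (Fin (xv S p)) (Val S (curr S p)) /\ PC S' p = PC35) \/
      (num_lt (Val S (curr S p)) (Fin (xv S p)) /\ PC S' p = PC33)) /\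
     ev_kind e = K34 /\ ev_chi e = ChiNone)
  \/ (PC S p = PC35 /\ PC S' p = PC0 /\ curr S' p = curr S p /\
     ev_kind e = K35 /\ ev_adr e = curr S p /\
     ((Val S (curr S p) = Fin (xv S p) /\ ev_chi e = Chi1) \/
      (Val S (curr S p) <> Fin (xv S p) /\ ev_chi e = Chi0))) ).

Definition step (p : P) (S : State A P) (e : Event A P) (S' : State A P) : Prop :=
  normal S /\ ev_proc e = p /\ others_same p S S' /\
  (step_inv p S e S' \/ step_fail p S e S' \/ step_AD p S e S' \/
   step_RM p S e S' \/ step_contains p S e S').

(* a history sequence (S_0, e_0, S_1, e_1, ...): of finite length
   N = Some n (actions e_0..e_{n-1}) or infinite (N = None) *)
Definition valid (N : option nat) (i : nat) : Prop :=
  match N with None => True | Some n => i < n end.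

Definition history (N : option nat) (S : nat -> State A P) (e : nat -> Event A P)
  : Prop :=
  initial (S 0) /\
  forall i, valid N i -> exists p, step p (S i) (e i) (S (i + 1)).

End Model.

(* events of M_H: actions e_i, and CONTAINS executions given by the index b
   of their 3.1 action and c of their return (3.5) action *)
Inductive MEv := MAct (i : nat) | MCnt (b c : nat).

Section Structure.
Context {A P : Type} (N : option nat) (e : nat -> Event A P).

Definition cnt_exec (b c : nat) : Prop :=
  valid N c /\ b < c /\ ev_kind (e b) = K31 /\ ev_kind (e c) = K35 /\
  ev_proc (e c) = ev_proc (e b) /\
  (forall k, b < k < c -> ev_proc (e k) = ev_proc (e b) -> ev_kind (e k) <> K35).

Definition is_ev (X : MEv) : Prop :=
  match X with MAct i => valid N i | MCnt b c => cnt_exec b c end.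

Definition is_action (X : MEv) : Prop :=
  match X with MAct _ => True | MCnt _ _ => False end.

Definition Begin (X : MEv) : nat := match X with MAct i => i | MCnt b _ => b end.
Definition End (X : MEv) : nat := match X with MAct i => i | MCnt _ c => c end.

Definition mlt (X Y : MEv) : Prop := End X < Begin Y.

Definition isAdd (X : MEv) : Prop :=
  match X with MAct i => ev_kind (e i) = KAdd | MCnt _ _ => False end.
Definition isRem (X : MEv) : Prop :=
  match X with MAct i => ev_kind (e i) = KRem | MCnt _ _ => False end.
Definition isCnt (X : MEv) : Prop :=
  match X with MAct _ => False | MCnt _ _ => True end.

Definition mval (X : MEv) : nat :=
  match X with MAct i => ev_val (e i) | MCnt _ c => ev_val (e c) end.
Definition mchi (X : MEv) : Chi :=
  match X with MAct i => ev_chi (e i) | MCnt _ c => ev_chi (e c) end.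
(* adr of an action; for a CONTAINS execution, the final value of curr *)
Definition madr (X : MEv) : A :=
  match X with MAct i => ev_adr (e i) | MCnt _ c => ev_adr (e c) end.

Definition is_activation (a : A) (i : nat) : Prop :=
  valid N i /\ ev_kind (e i) = KAdd /\ ev_chi (e i) = Chi0 /\ ev_adr (e i) = a.

Definition activation (a : A) : nat := epsilon (inhabits 0) (is_activation a).

Definition gamma (X : MEv) : nat := activation (madr X).

Definition Op (p : Chi) (X : MEv) : Prop :=
  (isAdd X \/ isRem X \/ isCnt X) /\ mchi X = p.

Definition axiom_A0 : Prop :=
  (forall X, is_ev X ->
     ~ (isAdd X /\ isRem X) /\ ~ (isAdd X /\ isCnt X) /\ ~ (isRem X /\ isCnt X)) /\
  (forall X, is_ev X -> isAdd X \/ isRem X -> is_action X) /\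
  (forall X, is_ev X -> isCnt X -> ~ is_action X) /\
  (forall X, is_ev X -> is_ev (MAct (Begin X)) /\ is_ev (MAct (End X))) /\
  (forall X, is_ev X -> isCnt X -> mlt (MAct (Begin X)) (MAct (End X))) /\
  (forall i j, is_ev (MAct i) -> is_ev (MAct j) ->
     mlt (MAct i) (MAct j) \/ MAct i = MAct j \/ mlt (MAct j) (MAct i)).

Definition axiom_A1 : Prop :=
  forall X, is_ev X -> Op Chi1 X ->
    let G := MAct (gamma X) in
    is_ev G /\ isAdd G /\ mchi G = Chi0 /\ mval G = mval X /\
    mlt G (MAct (End X)) /\
    ~ (exists R, is_ev R /\ isRem R /\ mchi R = Chi1 /\
         MAct (gamma R) = G /\ mlt G R /\ mlt R X).

Definition axiom_A2 : Prop :=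
  forall B X, is_ev B -> is_ev X -> Op Chi0 B -> isAdd X -> mchi X = Chi0 ->
    mlt X B -> mval X = mval B ->
    exists R, is_ev R /\ isRem R /\ mchi R = Chi1 /\
      X = MAct (gamma R) /\ mlt R (MAct (End B)).

End Structure.

(* Main.v *)
Require Import Defs.
From Stdlib Require Import Arith List ClassicalEpsilon Classical Lia.

Lemma num_lt_trans a b c : num_lt a b -> num_lt b c -> num_lt a c.
Proof. destruct a, b, c; simpl; intros; first [exact I | lia | tauto]. Qed.
Lemma num_lt_irrefl a : ~ num_lt a a.
Proof. destruct a; simpl; intros; lia || tauto. Qed.
Lemma num_lt_le_trans a b c : num_lt a b -> num_le b c -> num_lt a c.
Proof. intros h [h'|h']; [eapply num_lt_trans; eauto | subst; auto]. Qed.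
Lemma num_le_lt_trans a b c : num_le a b -> num_lt b c -> num_lt a c.
Proof. intros [h|h] h'; [eapply num_lt_trans; eauto | subst; auto]. Qed.
Lemma num_le_trans a b c : num_le a b -> num_le b c -> num_le a c.
Proof. intros [h|h] h'; [left; eapply num_lt_le_trans; eauto | subst; auto]. Qed.
Lemma num_lt_le_false a b : num_lt a b -> num_le b a -> False.
Proof. intros h h'. apply (num_lt_irrefl a). eapply num_lt_le_trans; eauto. Qed.
Lemma num_le_antisym a b : num_le a b -> num_le b a -> a = b.
Proof. intros [h|h] h'; auto. exfalso; eapply num_lt_le_false; eauto. Qed.
Lemma num_lt_Inf a : ~ num_lt Inf a.
Proof. destruct a; simpl; tauto. Qed.
Lemma num_lt_NegOne a : ~ num_lt a NegOne.
Proof. destruct a; simpl; tauto. Qed.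

Section Generic.
Context {A P : Type} (H T : A).

Inductive reach (S0 : State A P) : A -> A -> Prop :=
| reach_refl u : reach S0 u u
| reach_step u w : u <> T -> reach S0 (Next S0 u) w -> reach S0 u w.

Lemma reach_snoc (S0 : State A P) u v : reach S0 u v -> v <> T -> reach S0 u (Next S0 v).
Proof.
  induction 1; intros.
  - apply reach_step; auto. apply reach_refl.
  - apply reach_step; auto.
Qed.

Lemma main_reach (S0 : State A P) a : main H T S0 a -> reach S0 H a.
Proof. induction 1; [apply reach_refl | apply reach_snoc; auto]. Qed.

Lemma normal_next (S0 : State A P) a : normal H T S0 -> Active S0 a -> a <> T ->
  Active S0 (Next S0 a) /\ num_lt (Val S0 a) (Val S0 (Next S0 a)).
Proof. intros (_&_&_&_&_&_&Hn) ha hb. apply Hn; auto. Qed.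

Lemma main_active (S0 : State A P) a : normal H T S0 -> main H T S0 a -> Active S0 a.
Proof.
  intros Hn. induction 1.
  - destruct Hn as (_&h&_). exact h.
  - apply normal_next; auto.
Qed.

Lemma reach_le (S0 : State A P) u w : normal H T S0 -> Active S0 u -> reach S0 u w ->
  Active S0 w /\ num_le (Val S0 u) (Val S0 w).
Proof.
  intros Hn Hu R. induction R.
  - split; auto. right; auto.
  - destruct (normal_next S0 u Hn Hu H0) as [h1 h2].
    destruct (IHR h1) as [h3 h4]. split; auto. left. eapply num_lt_le_trans; eauto.
Qed.

Lemma main_linear (S0 : State A P) a u : main H T S0 a -> main H T S0 u ->
  reach S0 u a \/ reach S0 a u.
Proof.
  induction 1 as [|a' Hm IH Hne]; intros Hu.
  - right. apply main_reach; auto.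
  - destruct (IH Hu) as [R|R].
    + left. apply reach_snoc; auto.
    + inversion R; subst.
      * left. apply reach_snoc; auto using reach_refl.
      * right. auto.
Qed.

Lemma gap (S0 : State A P) u a : normal H T S0 -> main H T S0 u -> main H T S0 a -> u <> T ->
  num_lt (Val S0 u) (Val S0 a) -> num_le (Val S0 (Next S0 u)) (Val S0 a).
Proof.
  intros Hn Hu Ha Ht Hlt.
  destruct (main_linear S0 a u Ha Hu) as [R|R].
  - inversion R; subst.
    + exfalso; eapply num_lt_irrefl; eauto.
    + destruct (normal_next S0 u Hn (main_active _ _ Hn Hu) Ht) as [h1 h2].
      apply (reach_le S0 _ _ Hn h1 H1).
  - exfalso. destruct (reach_le S0 a u Hn (main_active _ _ Hn Ha) R) as [_ h].
    eapply num_lt_le_false; eauto.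
Qed.

Lemma pred_uniq (S0 : State A P) v w : normal H T S0 -> main H T S0 v -> main H T S0 w ->
  v <> T -> w <> T -> Next S0 v = Next S0 w -> v = w.
Proof.
  intros Hn Hv Hw Hvt Hwt Heq.
  assert (K : forall v w, main H T S0 v -> main H T S0 w -> v <> T -> w <> T ->
     Next S0 v = Next S0 w -> reach S0 v w -> v = w).
  { clear v w Hv Hw Hvt Hwt Heq. intros v w Hv Hw Hvt Hwt Heq R.
    inversion R; subst; auto.
    destruct (normal_next S0 v Hn (main_active _ _ Hn Hv) Hvt) as [h1 h2].
    destruct (reach_le S0 _ _ Hn h1 H1) as [_ h3].
    destruct (normal_next S0 w Hn (main_active _ _ Hn Hw) Hwt) as [_ h4].
    rewrite <- Heq in h4. exfalso; eapply num_lt_le_false; eauto. }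
  destruct (main_linear S0 w v Hw Hv) as [R|R].
  - apply K; auto.
  - symmetry; apply K; auto.
Qed.
End Generic.

Section Step.
Context {A P : Type} (H T : A).

Ltac dstep Hs :=
  destruct Hs as [Hn [Hpr [Hoth [Hi|[Hf|[Had|[Hrm|Hct]]]]]]];
  [ destruct Hi as (Hpc0&Hpc1&Hhs&Hcur&Hk&Hv&Hc)
  | destruct Hf as (Hpk&Hpc1&Hc&Hv&Hhs&Hloc)
  | destruct Had as (Hpc0&Hpc1&Hk&Hv&Hloc&pp&Hpp&Hppt&Hlt&Hle&[(Heq&Hhs&Hc&Hadr)|(Hneq&a0&Hna&Hact&Hva&Hvals&Hnp&Hna0&Hnb&Hc&Hadr)])
  | destruct Hrm as (Hpc0&Hpc1&Hk&Hv&Hloc&[(cu&pr&Hmc&Hvc&Hmp&Hpt&Hnp&Hact&Hvals&Hnx&Hnb&Hc&Hadr)|(Hno&Hhs&Hc)])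
  | destruct Hct as (Hhs&Hxv&Hv&Hcases) ].

Lemma heap_same_main (S0 S1 : State A P) a : normal H T S0 -> heap_same T S0 S1 ->
  (main H T S0 a <-> main H T S1 a).
Proof.
  intros Hn (Ha&Hv&Hx). split.
  - induction 1.
    + apply main_H.
    + rewrite <- Hx; auto. apply main_next; auto. eapply main_active; eauto.
  - induction 1.
    + apply main_H.
    + rewrite Hx; auto. apply main_next; auto. eapply main_active; eauto.
Qed.

Lemma ad_main (S0 S1 : State A P) pp a : normal H T S0 -> main H T S0 pp -> pp <> T ->
  ~ Active S0 a -> Next S1 pp = a -> Next S1 a = Next S0 pp ->
  (forall b, Active S0 b -> b <> T -> b <> pp -> Next S1 b = Next S0 b) ->
  (forall v, main H T S0 v -> main H T S1 v) /\
  (forall v, main H T S1 v -> main H T S0 v \/ v = a).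
Proof.
  intros Hn Hpp Hppt Hna Hnp Hna0 Hnb.
  assert (HaT : a <> T). { intro; subst. apply Hna. destruct Hn as (_&_&h&_); auto. }
  assert (F : forall v, main H T S0 v -> main H T S1 v).
  { induction 1 as [|v Hv IH Hvt].
    - apply main_H.
    - destruct (classic (v = pp)) as [E|E].
      + subst v. rewrite <- Hna0. apply main_next; auto. rewrite <- Hnp. apply main_next; auto.
      + rewrite <- Hnb; auto. apply main_next; auto. eapply main_active; eauto. }
  split; auto.
  induction 1 as [|v Hv IH Hvt].
  - left; apply main_H.
  - destruct IH as [IH|IH].
    + destruct (classic (v = pp)) as [E|E].
      * subst v. right; auto.
      * left. rewrite Hnb; auto. apply main_next; auto. eapply main_active; eauto.
    + subst v. left. rewrite Hna0. apply main_next; auto.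
Qed.

Lemma rm_main (S0 S1 : State A P) cu pr : normal H T S0 -> main H T S0 cu ->
  main H T S0 pr -> pr <> T -> Next S0 pr = cu -> (exists n, Val S0 cu = Fin n) ->
  Next S1 pr = Next S0 cu ->
  (forall b, Active S0 b -> b <> T -> b <> pr -> Next S1 b = Next S0 b) ->
  (forall v, main H T S0 v -> v <> cu -> main H T S1 v) /\
  (forall v, main H T S1 v -> main H T S0 v /\ v <> cu).
Proof.
  intros Hn Hmc Hmp Hpt Hnp [n Hvc] Hnx Hnb.
  assert (HcT : cu <> T). { intro; subst. destruct Hn as (_&_&_&_&h&_). congruence. }
  assert (HcH : cu <> H). { intro; subst. destruct Hn as (_&_&_&h&_). congruence. }
  assert (Hpc : pr <> cu).
  { intro E. destruct (normal_next H T S0 pr Hn (main_active H T _ _ Hn Hmp) Hpt) as [_ h].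
    rewrite Hnp, E in h. eapply num_lt_irrefl; eauto. }
  assert (Hcc : Next S0 cu <> cu).
  { intro E. destruct (normal_next H T S0 cu Hn (main_active H T _ _ Hn Hmc) HcT) as [_ h].
    rewrite E in h. eapply num_lt_irrefl; eauto. }
  split.
  - assert (K : forall v, main H T S0 v -> (v <> cu -> main H T S1 v) /\ (v = cu -> main H T S1 pr)).
    { induction 1 as [|v Hv IH Hvt].
      - split; intros; [apply main_H | congruence].
      - destruct IH as [IH1 IH2]. split.
        + intro Hne. destruct (classic (v = cu)) as [E|E].
          * subst v. rewrite <- Hnx. apply main_next; auto.
          * destruct (classic (v = pr)) as [E2|E2].
            -- subst v. congruence.
            -- rewrite <- Hnb; auto. apply main_next; auto. eapply main_active; eauto.
        + intro E. assert (v = pr).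
          { apply (pred_uniq H T S0); auto. congruence. }
          subst v. apply IH1; auto. }
    intros v Hv Hne. apply (K v Hv); auto.
  - induction 1 as [|v Hv IH Hvt].
    + split; [apply main_H | auto].
    + destruct IH as [IH1 IH2]. destruct (classic (v = pr)) as [E|E].
      * subst v. rewrite Hnx. split; auto. apply main_next; auto.
      * rewrite Hnb; auto. 2: eapply main_active; eauto. split.
        -- apply main_next; auto.
        -- intro E2. apply E. apply (pred_uniq H T S0); auto. congruence.
Qed.

Lemma contains_kind p (S0 : State A P) e0 S1 : step_contains H T p S0 e0 S1 ->
  ev_kind e0 <> KAdd /\ ev_kind e0 <> KRem /\ ev_kind e0 <> KInv.
Proof.
  intros (_&_&_&C).
  destruct C as [(_&_&_&k&_)|[(_&_&_&k&_)|[(_&_&_&k&_)|[(_&_&_&k&_)|(_&_&_&k&_)]]]];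
  rewrite k; repeat split; discriminate.
Qed.

Lemma step_active p (S0 : State A P) e0 S1 a : step H T p S0 e0 S1 -> Active S0 a ->
  Active S1 a /\ Val S1 a = Val S0 a.
Proof.
  intros Hs Ha. dstep Hs;
  try (destruct Hhs as (h1&h2&_); split; [apply h1; auto | apply h2; auto]).
  - split; [apply Hact; auto | apply Hvals; auto].
  - split; [apply Hact; auto | apply Hvals; auto].
Qed.


Ltac kill_ct Hcases := decompose [and or] Hcases; congruence.

Lemma step_active_back p (S0 : State A P) e0 S1 a : step H T p S0 e0 S1 -> Active S1 a ->
  Active S0 a \/ (ev_kind e0 = KAdd /\ ev_chi e0 = Chi0 /\ ev_adr e0 = a).
Proof.
  intros Hs Ha. dstep Hs;
  try (destruct Hhs as (h1&_); left; apply h1; auto).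
  - apply Hact in Ha. destruct Ha as [Ha|Ha]; auto. right; subst; auto.
  - left; apply Hact; auto.
Qed.

Lemma step_main_keep p (S0 : State A P) e0 S1 v : step H T p S0 e0 S1 -> main H T S0 v ->
  main H T S1 v \/ (ev_kind e0 = KRem /\ ev_chi e0 = Chi1 /\ ev_adr e0 = v).
Proof.
  intros Hs Hm. dstep Hs;
  try (left; apply (heap_same_main S0 S1 v Hn Hhs); auto; fail).
  - left. apply (ad_main S0 S1 pp a0); auto.
  - destruct (classic (v = cu)) as [E|E].
    + right. subst; auto.
    + left. destruct (rm_main S0 S1 cu pr) as [h _]; eauto.
Qed.

Lemma step_main_new p (S0 : State A P) e0 S1 v : step H T p S0 e0 S1 -> main H T S1 v ->
  main H T S0 v \/ ~ Active S0 v.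
Proof.
  intros Hs Hm. dstep Hs;
  try (left; apply (heap_same_main S0 S1 v Hn Hhs); auto; fail).
  - destruct (ad_main S0 S1 pp a0) as [_ h]; auto.
    destruct (h v Hm) as [h'|h']; auto. subst; auto.
  - left. destruct (rm_main S0 S1 cu pr) as [_ h]; eauto. apply h; auto.
Qed.

Lemma step_rm1 p (S0 : State A P) e0 S1 : step H T p S0 e0 S1 ->
  ev_kind e0 = KRem -> ev_chi e0 = Chi1 ->
  main H T S0 (ev_adr e0) /\ ~ main H T S1 (ev_adr e0) /\
  Val S0 (ev_adr e0) = Fin (ev_val e0).
Proof.
  intros Hs K C. dstep Hs; try congruence; try kill_ct Hcases.
  rewrite Hadr, Hv. split; [|split]; auto.
  destruct (rm_main S0 S1 cu pr) as [_ h]; eauto. intro hm. apply h in hm. tauto.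
Qed.

Lemma step_val0 p (S0 : State A P) e0 S1 : step H T p S0 e0 S1 ->
  (ev_kind e0 = KAdd \/ ev_kind e0 = KRem) -> ev_chi e0 = Chi0 ->
  forall a, main H T S0 a -> Val S0 a <> Fin (ev_val e0).
Proof.
  intros Hs K C a Ha. dstep Hs; try (destruct K; congruence); try (destruct K; kill_ct Hcases).
  - intro E. apply Hneq. rewrite Hv in E.
    apply num_le_antisym; auto. rewrite <- E. apply (gap H T S0); auto.
    rewrite E; auto.
  - intro E. apply Hno. exists a. rewrite <- Hv. auto.
Qed.

Lemma step_ad1 p (S0 : State A P) e0 S1 : step H T p S0 e0 S1 ->
  ev_kind e0 = KAdd -> ev_chi e0 = Chi1 ->
  main H T S0 (ev_adr e0) /\ Val S0 (ev_adr e0) = Fin (ev_val e0).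
Proof.
  intros Hs K C. dstep Hs; try congruence; try kill_ct Hcases.
  rewrite Hadr, Hv. split; auto. apply main_next; auto.
Qed.

Lemma step_ad0 p (S0 : State A P) e0 S1 : step H T p S0 e0 S1 ->
  ev_kind e0 = KAdd -> ev_chi e0 = Chi0 ->
  ~ Active S0 (ev_adr e0) /\ main H T S1 (ev_adr e0) /\
  Val S1 (ev_adr e0) = Fin (ev_val e0).
Proof.
  intros Hs K C. dstep Hs; try congruence; try kill_ct Hcases.
  rewrite Hadr, Hv. split; [|split]; auto.
  destruct (ad_main S0 S1 pp a0) as [h _]; auto.
  rewrite <- Hnp. apply main_next; auto.
Qed.

Lemma step_NX p (S0 : State A P) e0 S1 u : step H T p S0 e0 S1 ->
  Active S0 u -> u <> T -> main H T S1 u \/ Next S1 u = Next S0 u.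
Proof.
  intros Hs Ha Ht. dstep Hs;
  try (right; destruct Hhs as (_&_&h); apply h; auto; fail).
  - destruct (classic (u = pp)) as [E|E].
    + left. subst pp. destruct (ad_main S0 S1 u a0) as [h _]; auto.
    + right. apply Hnb; auto.
  - destruct (classic (u = pr)) as [E|E].
    + left. subst pr. destruct (rm_main S0 S1 cu u) as [h _]; eauto.
      apply h; auto. intro E. rewrite <- E in Hnp.
      destruct (normal_next H T S0 u Hn Ha Ht) as [_ h2].
      rewrite Hnp in h2. eapply num_lt_irrefl; eauto.
    + right. apply Hnb; auto.
Qed.

Definition inrng (pc : PCv) : Prop := pc = PC32 \/ pc = PC33 \/ pc = PC34 \/ pc = PC35.

Definition LI (S0 : State A P) q : Prop :=
  (PC S0 q = PC32 -> curr S0 q = H) /\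
  (PC S0 q = PC33 -> Active S0 (curr S0 q) /\ num_lt (Val S0 (curr S0 q)) (Fin (xv S0 q))) /\
  (PC S0 q = PC34 -> Active S0 (curr S0 q)) /\
  (PC S0 q = PC35 -> Active S0 (curr S0 q) /\ num_le (Fin (xv S0 q)) (Val S0 (curr S0 q))).

Lemma step_K31 p (S0 : State A P) e0 S1 : step H T p S0 e0 S1 -> ev_kind e0 = K31 ->
  PC S1 p = PC32 /\ curr S1 p = H /\ xv S1 p = xv S0 p.
Proof.
  intros Hs K. dstep Hs; try congruence;
  try (destruct Hpk as [[_ k]|[_ k]]; congruence).
  decompose [and or] Hcases; try congruence. auto.
Qed.

Lemma step_K35 p (S0 : State A P) e0 S1 : step H T p S0 e0 S1 -> ev_kind e0 = K35 ->
  PC S0 p = PC35 /\ ev_adr e0 = curr S0 p /\ ev_val e0 = xv S0 p /\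
  ((Val S0 (curr S0 p) = Fin (xv S0 p) /\ ev_chi e0 = Chi1) \/
   (Val S0 (curr S0 p) <> Fin (xv S0 p) /\ ev_chi e0 = Chi0)).
Proof.
  intros Hs K. dstep Hs; try congruence;
  try (destruct Hpk as [[_ k]|[_ k]]; congruence).
  destruct Hcases as [h|[h|[h|[h|h]]]]; decompose [and] h; try congruence.
  repeat split; auto.
Qed.

Lemma step_mid p (S0 : State A P) e0 S1 : step H T p S0 e0 S1 -> inrng (PC S0 p) ->
  ev_kind e0 <> K35 ->
  inrng (PC S1 p) /\ xv S1 p = xv S0 p /\ heap_same T S0 S1 /\
  (curr S1 p = curr S0 p \/
   (curr S1 p = Next S0 (curr S0 p) /\ (PC S0 p = PC32 \/ PC S0 p = PC33))).
Proof.
  intros Hs Hr K. unfold inrng in *. dstep Hs;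
  try (exfalso; decompose [or] Hr; congruence);
  try (exfalso; decompose [or and] Hpk; decompose [or] Hr; congruence).
  destruct Hcases as [h|[h|[h|[h|h]]]]; decompose [and] h.
  + exfalso; decompose [or] Hr; congruence.
  + split; [tauto|]. intuition.
  + split; [tauto|]. intuition.
  + unfold inrng in *; intuition.
  + congruence.
Qed.

Lemma step_LI p (S0 : State A P) e0 S1 q : H <> T -> step H T p S0 e0 S1 -> LI S0 q -> LI S1 q.
Proof.
  intros HT Hs Hl. destruct (classic (q = p)) as [E|E].
  - subst q. unfold LI in *. destruct Hl as (L1&L2&L3&L4).
    dstep Hs;
    try (refine (conj _ (conj _ (conj _ _))); intro hpc; exfalso; rewrite Hpc1 in hpc; discriminate).
    + refine (conj _ (conj _ (conj _ _))); intro hpc; exfalso; rewrite hpc in Hpc1; decompose [or] Hpc1; discriminate.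
    + destruct Hhs as (Ha&Hvs&Hnx).
      destruct Hcases as [(h0&h1&hc&_)|[(h0&h1&hc&_)|[(h0&h1&hc&_)|[(h0&hc&hd&_)|(h0&h1&_)]]]].
      * refine (conj _ (conj _ (conj _ _))); intro hpc; try (exfalso; congruence); auto.
      * refine (conj _ (conj _ (conj _ _))); intro hpc; try (exfalso; congruence).
        rewrite hc, L1; auto. apply Ha. apply (normal_next H T S0); auto.
        destruct Hn as (_&h&_); auto.
      * refine (conj _ (conj _ (conj _ _))); intro hpc; try (exfalso; congruence).
        destruct (L2 h0) as [k1 k2]. rewrite hc. apply Ha.
        apply (normal_next H T S0); auto. intro E; rewrite E in k2.
        destruct Hn as (_&_&_&_&h&_). rewrite h in k2. eapply num_lt_Inf; eauto.
      * pose proof (L3 h0) as hac.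
        rewrite hc, Hxv, (Hvs _ hac).
        refine (conj _ (conj _ (conj _ _))); intro hpc; destruct hd as [[k1 k2]|[k1 k2]];
          try (exfalso; congruence); try split; try (apply Ha); auto.
      * refine (conj _ (conj _ (conj _ _))); intro hpc; exfalso; congruence.
  - pose proof Hs as Hs2. destruct Hs2 as (_&_&Hoth&_). destruct (Hoth q E) as (e1&e2&e3&e4).
    unfold LI in *. rewrite e1, e2, e3. destruct Hl as (L1&L2&L3&L4).
    refine (conj _ (conj _ (conj _ _))); intro hpc.
    + auto.
    + destruct (L2 hpc) as [h1 h2]. split. apply (step_active _ _ _ _ _ Hs h1).
      rewrite (proj2 (step_active _ _ _ _ _ Hs h1)); auto.
    + apply (step_active _ _ _ _ _ Hs (L3 hpc)).
    + destruct (L4 hpc) as [h1 h2]. split. apply (step_active _ _ _ _ _ Hs h1).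
      rewrite (proj2 (step_active _ _ _ _ _ Hs h1)); auto.
Qed.

End Step.

Section Hist.
Context {A P : Type} (H T : A) (N : option nat) (St : nat -> State A P) (e : nat -> Event A P).
Hypothesis HT : H <> T.
Hypothesis Hh : history H T N St e.

Lemma valid_down k t : k <= t -> valid N t -> valid N k.
Proof. destruct N; simpl; lia. Qed.

Lemma stepAt t : valid N t -> exists p, step H T p (St t) (e t) (St (S t)).
Proof. intros v. destruct Hh as [_ h]. rewrite <- Nat.add_1_r. apply h; auto. Qed.

Lemma normal_at t : valid N t -> normal H T (St t).
Proof. intros v. destruct (stepAt t v) as [p (h&_)]. auto. Qed.

Definition upto t := forall k, k < t -> valid N k.
Lemma upto_valid t : valid N t -> upto (S t).
Proof. intros v k hk. apply (valid_down k t); auto; lia. Qed.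
Lemma upto_le s t : s <= t -> upto t -> upto s.
Proof. intros h u k hk. apply u; lia. Qed.
Lemma upto_valid' t : valid N t -> upto t.
Proof. intros v. apply (upto_le t (S t)); [lia| apply upto_valid; auto]. Qed.

Lemma active_mono s t a : s <= t -> upto t -> Active (St s) a ->
  Active (St t) a /\ Val (St t) a = Val (St s) a.
Proof.
  induction t; intros hst u ha.
  - assert (s = 0) by lia. subst; auto.
  - destruct (Nat.eq_dec s (S t)) as [E|E]. { subst; auto. }
    destruct IHt as [h1 h2]; [lia | apply (upto_le t (S t)); auto | auto |].
    destruct (stepAt t (u t (Nat.lt_succ_diag_r t))) as [p Hs].
    destruct (step_active H T p _ _ _ a Hs h1) as [k1 k2]. split; auto. congruence.
Qed.

Lemma notmain_persist s t a : s <= t -> upto t -> Active (St s) a ->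
  ~ main H T (St s) a -> ~ main H T (St t) a.
Proof.
  induction t; intros hst u ha hm.
  - assert (s = 0) by lia. subst; auto.
  - destruct (Nat.eq_dec s (S t)) as [E|E]. { subst; auto. }
    assert (IH : ~ main H T (St t) a).
    { apply IHt; auto; [lia | apply (upto_le t (S t)); auto]. }
    destruct (stepAt t (u t (Nat.lt_succ_diag_r t))) as [p Hs].
    intro hm'. destruct (step_main_new H T p _ _ _ a Hs hm') as [k|k]; auto.
    apply k. apply (active_mono s t); auto; [lia | apply (upto_le t (S t)); auto].
Qed.

Lemma main_T t : upto t -> main H T (St t) T.
Proof.
  induction t; intros u.
  - destruct Hh as [(_&hn&_) _].
    assert (K : main H T (St 0) (Next (St 0) H)) by (apply main_next; [apply main_H|auto]).
    rewrite hn in K; auto.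
  - destruct (stepAt t (u t (Nat.lt_succ_diag_r t))) as [p Hs].
    assert (IH : main H T (St t) T) by (apply IHt; apply (upto_le t (S t)); auto).
    destruct (step_main_keep H T p _ _ _ T Hs IH) as [k|(k1&k2&k3)]; auto.
    destruct (step_rm1 H T p _ _ _ Hs k1 k2) as (_&_&k4). rewrite k3 in k4.
    destruct Hs as ((_&_&_&_&hT&_)&_). congruence.
Qed.

Lemma main_persist s t a : main H T (St s) a -> s <= t -> upto t ->
  main H T (St t) a \/ exists r, s <= r < t /\ ev_kind (e r) = KRem /\
     ev_chi (e r) = Chi1 /\ ev_adr (e r) = a.
Proof.
  intros hm. induction t; intros hst u.
  - assert (s = 0) by lia. subst; auto.
  - destruct (Nat.eq_dec s (S t)) as [E|E]. { subst; auto. }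
    destruct IHt as [IH|(r&h1&h2)]; [lia | apply (upto_le t (S t)); auto | |].
    + destruct (stepAt t (u t (Nat.lt_succ_diag_r t))) as [p Hs].
      destruct (step_main_keep H T p _ _ _ a Hs IH) as [k|k]; auto.
      right. exists t. split; [lia | auto].
    + right. exists r. split; [lia | auto].
Qed.

Lemma act_exists t a : upto t -> Active (St t) a -> a <> H -> a <> T ->
  exists j, j < t /\ is_activation N e a j /\ Val (St t) a = Fin (ev_val (e j)).
Proof.
  induction t; intros u ha hH hT.
  - destruct Hh as [(hi&_) _]. apply hi in ha. tauto.
  - pose proof (u t (Nat.lt_succ_diag_r t)) as vt.
    destruct (stepAt t vt) as [p Hs].
    destruct (step_active_back H T p _ _ _ a Hs ha) as [k|(k1&k2&k3)].
    + destruct IHt as (j&j1&j2&j3); auto. apply (upto_le t (S t)); auto.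
      exists j. split; [lia|]. split; auto.
      rewrite (proj2 (step_active H T p _ _ _ a Hs k)); auto.
    + exists t. split; [lia|]. split. { repeat split; auto. }
      destruct (step_ad0 H T p _ _ _ Hs k1 k2) as (_&_&h). rewrite k3 in h. auto.
Qed.

Lemma act_unique a j1 j2 : is_activation N e a j1 -> is_activation N e a j2 -> j1 = j2.
Proof.
  assert (K : forall j1 j2, is_activation N e a j1 -> is_activation N e a j2 -> j1 < j2 -> False).
  { clear j1 j2. intros j1 j2 (v1&k1&c1&a1) (v2&k2&c2&a2) lt.
    destruct (stepAt j1 v1) as [p1 Hs1]. destruct (stepAt j2 v2) as [p2 Hs2].
    destruct (step_ad0 H T p1 _ _ _ Hs1 k1 c1) as (_&m1&_).
    destruct (step_ad0 H T p2 _ _ _ Hs2 k2 c2) as (na&_&_).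
    apply na. rewrite a2, <- a1.
    apply (active_mono (S j1) j2); auto. apply upto_valid'; auto.
    apply (main_active H T); auto. apply normal_at. apply (valid_down _ j2); auto. }
  intros h1 h2. destruct (lt_eq_lt_dec j1 j2) as [[l|l]|l]; auto; exfalso; eauto.
Qed.

Lemma activation_eq a j : is_activation N e a j -> activation N e a = j.
Proof.
  intros h. unfold activation.
  apply (act_unique a); auto.
  apply (epsilon_spec (inhabits 0) (is_activation N e a)). exists j; auto.
Qed.


Definition Inv b t u := main H T (St t) u \/
  exists s, b <= s < t /\ main H T (St s) u /\ Next (St t) u = Next (St s) u.

Lemma Inv_step b t u : valid N t -> b <= t -> Inv b t u -> Active (St t) u -> Inv b (S t) u.
Proof.
  intros v hb hi ha. destruct (stepAt t v) as [p Hs].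
  destruct (classic (u = T)) as [E|E].
  { left. subst. apply (main_T). apply upto_valid; auto. }
  destruct (step_NX H T p _ _ _ u Hs ha E) as [k|k]. { left; auto. }
  right. destruct hi as [hi|(s&h1&h2&h3)].
  - exists t. split; [lia|]. auto.
  - exists s. split; [lia|]. split; auto. congruence.
Qed.

Lemma Inv_from b s t w : b <= s -> s <= t -> upto t -> main H T (St s) w -> Inv b t w.
Proof.
  induction t; intros hb hst u hm.
  - assert (s = 0) by lia. subst. left; auto.
  - destruct (Nat.eq_dec s (S t)) as [E|E]. { subst; left; auto. }
    pose proof (u t (Nat.lt_succ_diag_r t)) as vt.
    apply Inv_step; auto; [lia| apply IHt; auto; [lia | apply (upto_le t (S t)); auto] |].
    apply (active_mono s t); auto. lia. apply (upto_valid' t vt).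
    apply (main_active H T); auto. apply (normal_at). apply (valid_down s t); auto; lia.
Qed.

Lemma LI_all t : upto t -> forall q, LI H (St t) q.
Proof.
  induction t; intros u q.
  - destruct Hh as [(_&_&_&_&hpc) _]. unfold LI. rewrite hpc.
    refine (conj _ (conj _ (conj _ _))); intro h; discriminate.
  - pose proof (u t (Nat.lt_succ_diag_r t)) as vt.
    destruct (stepAt t vt) as [p Hs].
    apply (step_LI H T p _ _ _ q HT Hs). apply IHt. apply (upto_le t (S t)); auto.
Qed.

Lemma curr_active t q : valid N t -> inrng (PC (St t) q) -> Active (St t) (curr (St t) q).
Proof.
  intros v hr. destruct (LI_all t (upto_valid' t v) q) as (L1&L2&L3&L4).
  destruct hr as [h|[h|[h|h]]].
  - rewrite (L1 h). destruct (normal_at t v) as (_&k&_); auto.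
  - apply (L2 h).
  - apply (L3 h).
  - apply (L4 h).
Qed.

Section OneExec.
Variables b c : nat.
Hypothesis Hx : cnt_exec N e b c.
Let p := ev_proc (e b).

Lemma exec_step t : S b <= t < c -> inrng (PC (St t) p) ->
  inrng (PC (St (S t)) p) /\ xv (St (S t)) p = xv (St t) p /\
  (exists q, step H T q (St t) (e t) (St (S t))) /\
  (curr (St (S t)) p = curr (St t) p \/
   (curr (St (S t)) p = Next (St t) (curr (St t) p) /\
    (PC (St t) p = PC32 \/ PC (St t) p = PC33) /\ heap_same T (St t) (St (S t)))).
Proof.
  intros ht hr. destruct Hx as (vc&hbc&k31&k35&pc&hno).
  assert (vt : valid N t) by (apply (valid_down t c); auto; lia).
  destruct (stepAt t vt) as [q Hs].
  destruct (classic (q = p)) as [E|E].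
  - subst q. assert (K : ev_kind (e t) <> K35).
    { apply hno. lia. destruct Hs as (_&h&_). auto. }
    destruct (step_mid H T p _ _ _ Hs hr K) as (k1&k2&k3&k4).
    split; auto. split; auto. split; [exists p; auto|].
    destruct k4 as [k4|(k4&k5)]; auto.
  - pose proof Hs as Hs2. destruct Hs2 as (_&_&Hoth&_).
    destruct (Hoth p (not_eq_sym E)) as (e1&e2&e3&e4).
    rewrite e1, e2, e3. split; auto. split; auto. split; [exists q; auto|]. auto.
Qed.

Lemma exec_first : inrng (PC (St (S b)) p) /\ curr (St (S b)) p = H.
Proof.
  destruct Hx as (vc&hbc&k31&k35&pc&hno).
  assert (vb : valid N b) by (apply (valid_down b c); auto; lia).
  destruct (stepAt b vb) as [q Hs].
  assert (q = p). { destruct Hs as (_&h&_). unfold p. auto. }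
  subst q. destruct (step_K31 H T p _ _ _ Hs k31) as (h1&h2&_).
  split; auto. left; auto.
Qed.

Lemma exec_inv t : S b <= t <= c ->
  inrng (PC (St t) p) /\ xv (St t) p = xv (St (S b)) p /\ Inv b t (curr (St t) p).
Proof.
  destruct exec_first as [f1 f2].
  pose proof Hx as Hx2. destruct Hx2 as (vc&hbc&_).
  induction t; intros ht. { lia. }
  destruct (Nat.eq_dec t b) as [E|E].
  { subst t. split; auto. split; auto. left. rewrite f2. apply main_H. }
  destruct IHt as (i1&i2&i3); [lia|].
  assert (vt : valid N t) by (apply (valid_down t c); auto; lia).
  destruct (exec_step t) as (k1&k2&k3&k4); auto; [lia|].
  split; auto. split; [congruence|].
  destruct k4 as [k4|(k4&k5&k6)].
  - rewrite k4. apply Inv_step; auto; [lia|]. apply curr_active; auto.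
  - rewrite k4.
    assert (nT : curr (St t) p <> T).
    { destruct k5 as [k5|k5].
      - destruct (LI_all t (upto_valid' t vt) p) as (L1&_). rewrite (L1 k5). auto.
      - destruct (LI_all t (upto_valid' t vt) p) as (_&L2&_).
        destruct (L2 k5) as [_ h]. intro E2. rewrite E2 in h.
        destruct (normal_at t vt) as (_&_&_&_&hT&_). rewrite hT in h.
        eapply num_lt_Inf; eauto. }
    assert (K : exists s, b <= s <= t /\ main H T (St s) (Next (St t) (curr (St t) p))).
    { destruct i3 as [i3|(s&s1&s2&s3)].
      - exists t. split; [lia|]. apply main_next; auto.
      - exists s. split; [lia|]. rewrite s3. apply main_next; auto. }
    destruct K as (s&hs&hm).
    apply (Inv_from b s (S t)); auto; [lia|lia|]. apply upto_valid; auto.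
Qed.


Lemma exec_last : PC (St c) p = PC35 /\ ev_adr (e c) = curr (St c) p /\
  ev_val (e c) = xv (St c) p /\
  ((Val (St c) (curr (St c) p) = Fin (xv (St c) p) /\ ev_chi (e c) = Chi1) \/
   (Val (St c) (curr (St c) p) <> Fin (xv (St c) p) /\ ev_chi (e c) = Chi0)).
Proof.
  destruct Hx as (vc&hbc&k31&k35&pc&hno).
  destruct (stepAt c vc) as [q Hs].
  assert (q = p). { destruct Hs as (_&h&_). unfold p. congruence. }
  subst q. apply (step_K35 H T p _ _ _ Hs k35).
Qed.

Lemma exec_val a : (forall k, b <= k <= c -> main H T (St k) a) ->
  Val (St b) a = Fin (xv (St (S b)) p) ->
  forall t, S b <= t <= c -> num_le (Val (St t) (curr (St t) p)) (Fin (xv (St (S b)) p)).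
Proof.
  intros hm hva. destruct exec_first as [f1 f2].
  pose proof Hx as Hx2. destruct Hx2 as (vc&hbc&_).
  induction t; intros ht. { lia. }
  assert (vSt : valid N (S t)) by (apply (valid_down (S t) c); auto; lia).
  destruct (Nat.eq_dec t b) as [E|E].
  { subst t. rewrite f2. destruct (normal_at (S b) vSt) as (_&_&_&hH&_). rewrite hH.
    left. simpl. auto. }
  assert (vt : valid N t) by (apply (valid_down t c); auto; lia).
  destruct (exec_inv t) as (i1&i2&i3); [lia|].
  destruct (exec_step t) as (k1&k2&k3&k4); auto; [lia|].
  assert (IH : num_le (Val (St t) (curr (St t) p)) (Fin (xv (St (S b)) p))) by (apply IHt; lia).
  set (x0 := xv (St (S b)) p) in *.
  assert (Va : forall s, b <= s <= t -> Val (St s) a = Fin x0).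
  { intros s hs. rewrite <- hva. apply (active_mono b s); auto. lia.
    apply upto_valid'. apply (valid_down s c); auto; lia.
    apply (main_active H T). apply normal_at. apply (valid_down b c); auto; lia.
    apply hm. lia. }
  destruct k4 as [k4|(k4&k5&k6)].
  - rewrite k4. rewrite (proj2 (active_mono t (S t) _ ltac:(lia) (upto_valid t vt) (curr_active t p vt i1))). auto.
  - rewrite k4.
    assert (nT : curr (St t) p <> T).
    { destruct k5 as [k5|k5].
      - destruct (LI_all t (upto_valid' t vt) p) as (L1&_). rewrite (L1 k5). auto.
      - destruct (LI_all t (upto_valid' t vt) p) as (_&L2&_).
        destruct (L2 k5) as [_ h]. intro E2. rewrite E2 in h.
        destruct (normal_at t vt) as (_&_&_&_&hT&_). rewrite hT in h.
        eapply num_lt_Inf; eauto. }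
    set (cu := curr (St t) p) in *.
    assert (hlt : num_lt (Val (St t) cu) (Val (St t) a)).
    { rewrite (Va t ltac:(lia)). destruct k5 as [k5|k5].
      - destruct (LI_all t (upto_valid' t vt) p) as (L1&_). unfold cu. rewrite (L1 k5).
        destruct (normal_at t vt) as (_&_&_&hH&_). rewrite hH. simpl; auto.
      - destruct (LI_all t (upto_valid' t vt) p) as (_&L2&_).
        destruct (L2 k5) as [_ h]. fold cu in h. rewrite i2 in h. auto. }
    assert (G : exists s, b <= s <= t /\ main H T (St s) cu /\ Next (St t) cu = Next (St s) cu).
    { destruct i3 as [i3|(s&s1&s2&s3)].
      - exists t. split; [lia|]. auto.
      - exists s. split; [lia|]. auto. }
    destruct G as (s&hs&hms&hns). rewrite hns.
    assert (vs : valid N s) by (apply (valid_down s c); auto; lia).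
    assert (acs : Active (St s) (Next (St s) cu)).
    { apply (normal_next H T); auto. apply normal_at; auto. apply (main_active H T); auto. apply normal_at; auto. }
    assert (acu : Active (St s) cu) by (apply (main_active H T); auto; apply normal_at; auto).
    rewrite (proj2 (active_mono s (S t) _ ltac:(lia) (upto_valid t vt) acs)).
    rewrite <- (Va s hs).
    apply (gap H T); auto. apply normal_at; auto. apply hm; lia.
    rewrite (Va s hs). rewrite <- (Va t ltac:(lia)).
    rewrite <- (proj2 (active_mono s t _ ltac:(lia) (upto_valid' t vt) acu)). auto.
Qed.

End OneExec.

Lemma fin_not_HT t a n : valid N t -> Val (St t) a = Fin n -> a <> H /\ a <> T.
Proof.
  intros v hv. destruct (normal_at t v) as (_&_&_&hH&hT&_).
  split; intro E; subst; congruence.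
Qed.

Lemma A1_data X : is_ev N e X -> Op e Chi1 X ->
  exists a j s, is_activation N e a j /\ gamma N e X = j /\ ev_val (e j) = mval e X /\
    j < End X /\ Begin X <= s <= End X /\ valid N s /\ main H T (St s) a.
Proof.
  intros hev [hk hc]. destruct X as [i|b c]; simpl in *.
  - destruct (stepAt i hev) as [p Hs].
    assert (K : main H T (St i) (ev_adr (e i)) /\ Val (St i) (ev_adr (e i)) = Fin (ev_val (e i))).
    { destruct hk as [hk|[hk|hk]]; [| |contradiction].
      - apply (step_ad1 H T p _ _ _ Hs hk hc).
      - destruct (step_rm1 H T p _ _ _ Hs hk hc) as (k1&_&k3). auto. }
    destruct K as [k1 k2].
    destruct (fin_not_HT i _ _ hev k2) as [nH nT].
    destruct (act_exists i (ev_adr (e i))) as (j&j1&j2&j3); auto.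
    apply upto_valid'; auto. apply (main_active H T); auto. apply normal_at; auto.
    exists (ev_adr (e i)), j, i. split; auto. split. { unfold gamma; simpl. apply activation_eq; auto. }
    split. { rewrite k2 in j3. injection j3; auto. }
    refine (conj _ (conj _ (conj _ _))); try lia; auto.
  - pose proof hev as Hx. destruct hev as (vc&hbc&_).
    destruct (exec_last b c Hx) as (l1&l2&l3&l4).
    set (p := ev_proc (e b)) in *.
    destruct l4 as [(l4&l5)|(l4&l5)]; [|congruence].
    destruct (fin_not_HT c _ _ vc l4) as [nH nT].
    assert (ac : Active (St c) (curr (St c) p)).
    { apply curr_active; auto. right; right; right; auto. }
    destruct (act_exists c (curr (St c) p)) as (j&j1&j2&j3); auto.
    apply upto_valid'; auto.
    destruct (exec_inv b c Hx c) as (i1&i2&i3); [lia|].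
    assert (W : exists s, b <= s <= c /\ main H T (St s) (curr (St c) p)).
    { destruct i3 as [i3|(s&s1&s2&_)]; [exists c; split; [lia|auto] | exists s; split; [lia|auto]]. }
    destruct W as (s&hs&hm).
    exists (curr (St c) p), j, s. split; auto.
    split. { unfold gamma; simpl. rewrite l2. apply activation_eq; auto. }
    split. { rewrite l4 in j3. injection j3; intros; congruence. }
    split; auto. split; auto. split; auto. apply (valid_down s c); auto; lia.
Qed.

Lemma A1_proof : axiom_A1 N e.
Proof.
  intros X hev hop.
  destruct (A1_data X hev hop) as (a&j&s&hj&hg&hv&hjE&hs&vs&hm).
  simpl. rewrite hg. destruct hj as (vj&kj&cj&aj).
  split; auto. split; auto. split; auto. split; auto. split; [unfold mlt; simpl; auto|].
  intros (R&hR&rR&cR&gR&l1&l2).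
  destruct R as [r|]; simpl in *; [|contradiction].
  injection gR as gR. unfold mlt in l1, l2. simpl in l1, l2.
  destruct (stepAt r hR) as [p Hs].
  destruct (step_rm1 H T p _ _ _ Hs rR cR) as (m1&m2&m3).
  destruct (fin_not_HT r _ _ hR m3) as [nH nT].
  destruct (act_exists r (ev_adr (e r))) as (j'&j1&j2&j3); auto.
  apply upto_valid'; auto. apply (main_active H T); auto. apply normal_at; auto.
  unfold gamma in gR; simpl in gR. rewrite (activation_eq _ _ j2) in gR. subst j'.
  destruct j2 as (_&_&_&a2).
  assert (Ea : ev_adr (e r) = a) by congruence. rewrite Ea in *.
  apply (notmain_persist (S r) s a); auto. lia. apply upto_valid'; auto.
  apply (active_mono r (S r)); auto. apply upto_valid; auto.
  apply (main_active H T); auto. apply normal_at; auto.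
Qed.

Lemma A2_proof : axiom_A2 N e.
Proof.
  intros B X hB hX [hop hc0] hadd hcx hlt hval.
  destruct X as [j|]; simpl in *; [|contradiction].
  destruct (stepAt j hX) as [pj Hsj].
  destruct (step_ad0 H T pj _ _ _ Hsj hadd hcx) as (na&ma&va).
  set (a := ev_adr (e j)) in *.
  assert (isa : is_activation N e a j) by (repeat split; auto).
  assert (vE : valid N (End B)).
  { destruct B as [i|b c]; simpl in *; auto. destruct hB as (vc&_); auto. }
  assert (hbE : Begin B <= End B).
  { destruct B as [i|b c]; simpl in *; auto. destruct hB as (_&hbc&_); lia. }
  unfold mlt in hlt; simpl in hlt.
  destruct (classic (exists r, S j <= r < End B /\ ev_kind (e r) = KRem /\
     ev_chi (e r) = Chi1 /\ ev_adr (e r) = a)) as [(r&hr&kr&cr&ar)|NR].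
  { exists (MAct r). simpl. split. { apply (valid_down r (End B)); auto; lia. }
    split; auto. split; auto. split.
    - unfold gamma; simpl. rewrite ar. rewrite (activation_eq _ _ isa). auto.
    - unfold mlt; simpl; lia. }
  exfalso.
  assert (AM : forall k, S j <= k <= End B -> main H T (St k) a).
  { intros k hk.
    assert (uk : upto k) by (apply upto_valid'; apply (valid_down k (End B)); auto; lia).
    destruct (main_persist (S j) k a ma ltac:(lia) uk) as [h|(r&h1&h2&h3&h4)]; auto.
    exfalso. apply NR. exists r. split; auto. lia. }
  assert (VA : forall k, S j <= k <= End B -> Val (St k) a = Fin (ev_val (e j))).
  { intros k hk. rewrite <- va. apply (active_mono (S j) k); auto. lia.
    apply upto_valid'. apply (valid_down k (End B)); auto; lia.
    apply (main_active H T); auto. apply normal_at. apply (valid_down (S j) (End B)); auto; lia. }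
  destruct B as [i|b c]; simpl in *.
  - destruct (stepAt i hB) as [pi Hsi].
    destruct hop as [h|[h|h]]; [| |contradiction];
    apply (step_val0 H T pi _ _ _ Hsi ltac:(auto) hc0 a (AM i ltac:(lia)));
    rewrite (VA i ltac:(lia)); congruence.
  - pose proof hB as Hx. destruct hB as (vc&hbc&_).
    destruct (exec_last b c Hx) as (l1&l2&l3&l4).
    destruct (exec_inv b c Hx c) as (i1&i2&i3); [lia|].
    set (p := ev_proc (e b)) in *.
    assert (hv : Val (St b) a = Fin (xv (St (S b)) p)).
    { rewrite (VA b ltac:(lia)). congruence. }
    pose proof (exec_val b c Hx a ltac:(intros; apply AM; lia) hv c ltac:(lia)) as hle.
    destruct (LI_all c (upto_valid' c vc) p) as (_&_&_&L4).
    destruct (L4 l1) as [_ hge].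
    fold p in hle. rewrite <- i2 in hle.
    assert (Eq : Val (St c) (curr (St c) p) = Fin (xv (St c) p)) by (apply num_le_antisym; auto).
    destruct l4 as [(_&l5)|(l4&_)]; [congruence|auto].
Qed.

Lemma A0_proof : axiom_A0 N e.
Proof.
  unfold axiom_A0. split; [|split; [|split; [|split; [|split]]]].
  - intros [i|b c] _; simpl; repeat split; intros [h1 h2]; try congruence; auto.
  - intros [i|b c] _ h; simpl in *; auto. destruct h; auto.
  - intros [i|b c] _ h; simpl in *; auto.
  - intros [i|b c] h; simpl in *; auto. destruct h as (vc&hbc&_).
    split; auto. apply (valid_down b c); auto; lia.
  - intros [i|b c] h hc; simpl in *; [contradiction|]. destruct h as (_&hbc&_). unfold mlt; simpl; auto.
  - intros i j _ _. unfold mlt; simpl. destruct (lt_eq_lt_dec i j) as [[l|l]|l]; auto.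
Qed.

End Hist.


Theorem theorem4p9 (A P : Type) (H T : A) :
  H <> T ->
  (exists f : A -> nat, forall a b, f a = f b -> a = b) ->
  (exists g : nat -> A, forall m n, g m = g n -> m = n) ->
  forall (N : option nat) (S : nat -> State A P) (e : nat -> Event A P),
    history H T N S e ->
    axiom_A0 N e /\ axiom_A1 N e /\ axiom_A2 N e.
Proof.
  intros HT _ _ N S e Hh.
  split; [|split].
  - eapply A0_proof; eauto.
  - eapply A1_proof; eauto.
  - eapply A2_proof; eauto.
Qed.
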